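(* Let $X$ be a nonempty set. A rack structure $\rhd$ on $X$ is trivial (i.e. $x\rhd y=x$ for all $x,y\in X$) if and only if $(X,\rhd)$ acts faithfully on some nonempty set $M$ and the action satisfies $(m\cdot x)\cdot y=(m\cdot y)\cdot x$ for all $x,y\in X$, $m\in M$.
   Context: A rack is a set $X$ with a binary operation $\rhd$ such that each $x\mapsto x\rhd y$ is bijective and $(x\rhd y)\rhd z=(x\rhd z)\rhd(y\rhd z)$. A stabilizing family of $X$ is a finite family $(u_1,\ldots,u_s)$ with $(\cdots(x\rhd u_1)\cdots)\rhd u_s=x$ for all $x$. A rack action of $X$ on a set $M$ is a map $(m,x)\mapsto m\cdot x$ such that each $m\mapsto m\cdot x$ is a bijection, $(m\cdot x)\cdot y=(m\cdot y)\cdot(x\rhd y)$, and for every stabilizing family $(u_1,\ldots,u_s)$ and every cyclic shift $\sigma$ of $\{1,\ldots,s\}$, $(\cdots(m\cdot u_1)\cdots)\cdot u_s=(\cdots(m\cdot u_{\sigma(1)})\cdots)\cdot u_{\sigma(s)}$. The action is faithful if for each $m\in M$ the map $X\ni x\mapsto m\cdot x\in M$ is injective. *)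

(* Defs.v *)
From Stdlib Require Import List.
Import ListNotations.

Definition bijective {A B : Type} (f : A -> B) : Prop :=
  exists g : B -> A, (forall a, g (f a) = a) /\ (forall b, f (g b) = b).

Definition is_rack {X : Type} (op : X -> X -> X) : Prop :=
  (forall y, bijective (fun x => op x y)) /\
  (forall x y z, op (op x y) z = op (op x z) (op y z)).

Definition rack_iter {X : Type} (op : X -> X -> X) (x : X) (us : list X) : X :=
  fold_left op us x.

Definition stabilizing {X : Type} (op : X -> X -> X) (us : list X) : Prop :=
  forall x, rack_iter op x us = x.

Definition act_iter {X M : Type} (act : M -> X -> M) (m : M) (us : list X) : M :=
  fold_left act us m.

Definition rotate {A : Type} (k : nat) (l : list A) : list A :=
  skipn k l ++ firstn k l.

Definition is_rack_action {X M : Type} (op : X -> X -> X) (act : M -> X -> M)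
  : Prop :=
  (forall x, bijective (fun m => act m x)) /\
  (forall m x y, act (act m x) y = act (act m y) (op x y)) /\
  (forall us, stabilizing op us ->
     forall k, k < length us -> forall m, act_iter act m us = act_iter act m (rotate k us)).

Definition faithful_action {X M : Type} (act : M -> X -> M) : Prop :=
  forall m x y, act m x = act m y -> x = y.

Definition trivial_rack {X : Type} (op : X -> X -> X) : Prop :=
  forall x y, op x y = x.

(* Main.v *)
Require Import Defs.
From Stdlib Require Import List ZArith Lia ClassicalEpsilon FunctionalExtensionality.
Import ListNotations.

Section S.
Variable X : Type.
Definition dec (z a : X) : bool := if excluded_middle_informative (z = a) then true else false.
Definition actZ (m : X -> Z) (x : X) : X -> Z := fun z => (m z + if dec z x then 1 else 0)%Z.
Fixpoint cnt (z : X) (l : list X) : Z :=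
  match l with [] => 0%Z | a :: l => ((if dec z a then 1 else 0) + cnt z l)%Z end.
Lemma cnt_app z l1 l2 : cnt z (l1 ++ l2) = (cnt z l1 + cnt z l2)%Z.
Proof. induction l1; simpl; lia. Qed.
Lemma iter_eq l : forall m, fold_left actZ l m = fun z => (m z + cnt z l)%Z.
Proof.
  induction l as [|a l IH]; intros m; simpl; apply functional_extensionality; intros z.
  - lia.
  - rewrite IH. unfold actZ. lia.
Qed.
End S.

Theorem mainTheorem18 (X : Type) (x0 : X) (op : X -> X -> X) :
  is_rack op ->
  (trivial_rack op <->
   exists (M : Type) (act : M -> X -> M),
     inhabited M /\ is_rack_action op act /\ faithful_action act /\
     (forall (x y : X) (m : M), act (act m x) y = act (act m y) x)).
Proof.
  intros _; split.
  - intros Htr. exists (X -> Z), (@actZ X).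
    assert (Hc : forall x y m, actZ X (actZ X m x) y = actZ X (actZ X m y) x).
    { intros x y m. apply functional_extensionality; intros z. unfold actZ. lia. }
    split; [exact (inhabits (fun _ => 0%Z))|].
    split; [split; [|split]|split].
    + intros x. exists (fun m z => (m z - if dec X z x then 1 else 0)%Z).
      split; intros; apply functional_extensionality; intros z; unfold actZ; lia.
    + intros m x y. rewrite Htr. apply Hc.
    + intros us _ k _ m. unfold act_iter, rotate. rewrite !iter_eq.
      apply functional_extensionality; intros z.
      rewrite <- (firstn_skipn k us) at 1. rewrite !cnt_app. lia.
    + intros m x y H. apply (f_equal (fun f => f x)) in H. unfold actZ, dec in H.
      destruct (excluded_middle_informative (x = x)) as [_|n]; [|congruence].
      destruct (excluded_middle_informative (x = y)); [assumption|lia].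
    + exact Hc.
  - intros [M [act [[m] [[_ [Hd _]] [Hf Hc]]]]] x y.
    apply (Hf (act m y)). rewrite <- Hd. apply Hc.
Qed.
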